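(* Let $\mathcal A$ be finite, and assume the margin condition with parameter $\nu\in(0,\infty]$ and the policy overlap condition with constant $\beta_0>0$. Let $\pi^\star(a\mid x)=\mathbf 1\{a=a^\star(x)\}$. Then: (i) if $\nu\in(0,\infty)$, for every policy $\pi$ satisfying overlap, \[ \operatorname{Var}_{X\sim P_X,A\sim\pi(\cdot\mid X)}\Big(\frac{\pi^\star(A\mid X)}{\pi(A\mid X)}\Big)\le\frac{K}{\beta_0}\big(R^\star(\pi)-R^\star(\pi^\star)\big)^{\nu/(\nu+1)},\qquad K=\Big(\frac{(\nu+1)^{(\nu+1)/\nu}\,c}{\nu M}\Big)^{\nu/(\nu+1)}; \] (ii) if $\nu=\infty$, the same variance is at most $\frac{1}{\beta_0Mu_0}\big(R^\star(\pi)-R^\star(\pi^\star)\big)$.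
   Context: Contexts $X\sim P_X$ on $\mathcal X$, finite action set $\mathcal A$, outcome (loss) $Y\sim P_Y(\cdot\mid X,A)$ with $\mu(x,a)=\mathbb E[Y\mid X=x,A=a]$. $\mu^\star(x)=\min_{a\in\mathcal A}\mu(x,a)$, attained at $a^\star(x)$, and $\Delta_{\min}(x)=\min_{a\ne a^\star(x)}\mu(x,a)-\mu^\star(x)\ge0$. For a policy $\pi$, $R^\star(\pi)=\mathbb E_{X\sim P_X,A\sim\pi(\cdot\mid X)}[\mu(X,A)]$. Margin condition (parameter $\nu$, constants $M,c>0$): for $\nu\in(0,\infty)$, $\Pr(\Delta_{\min}(X)\le Mu)\le(cu)^\nu$ for all $u\ge0$; for $\nu=\infty$, there is $u_0>0$ with $\Pr(\Delta_{\min}(X)\le Mu_0)=0$. Policy overlap: $\pi(a^\star(x)\mid x)\ge\beta_0$ for all $x\in\mathcal X$. *)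

(* Defs.v *)
From HB Require Import structures.
From mathcomp Require Import all_boot all_order all_algebra.
From mathcomp Require Import all_classical all_reals all_analysis.
Set Implicit Arguments. Unset Strict Implicit. Unset Printing Implicit Defensive.
Import Order.TTheory GRing.Theory Num.Theory.
Local Open Scope classical_set_scope.
Local Open Scope ring_scope.

Section Defs.
Context {d : measure_display} {X : measurableType d} {R : realType} {A : finType}.

Definition pistar (astar : X -> A) (x : X) (a : A) : R :=
  if a == astar x then 1 else 0.

Definition Ejoint (P : probability X R) (pi : X -> A -> R) (f : X -> A -> R) : R :=
  Rintegral P setT (fun x => \sum_(a : A) pi x a * f x a).

Definition Varjoint (P : probability X R) (pi : X -> A -> R) (f : X -> A -> R) : R :=
  Ejoint P pi (fun x a => f x a ^+ 2) - (Ejoint P pi f) ^+ 2.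

Definition Rstar (P : probability X R) (mu : X -> A -> R) (pi : X -> A -> R) : R :=
  Ejoint P pi mu.

Definition Delta_min (mu : X -> A -> R) (astar : X -> A) (x : X) : \bar R :=
  \big[Order.min/+oo%E]_(a | a != astar x) ((mu x a - mu x (astar x))%:E).

Definition is_policy (pi : X -> A -> R) : Prop :=
  (forall x a, 0 <= pi x a) /\ (forall x, \sum_(a : A) pi x a = 1) /\
  (forall a, measurable_fun setT (fun x => pi x a)).

Definition margin_fin (P : probability X R) (mu : X -> A -> R) (astar : X -> A)
  (nu M c : R) : Prop :=
  forall u : R, 0 <= u ->
    (P [set x | (Delta_min mu astar x <= (M * u)%:E)%E] <= ((c * u) `^ nu)%:E)%E.

Definition margin_inf (P : probability X R) (mu : X -> A -> R) (astar : X -> A)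
  (M u0 : R) : Prop :=
  0 < u0 /\ P [set x | (Delta_min mu astar x <= (M * u0)%:E)%E] = 0%E.

Definition overlap (astar : X -> A) (beta0 : R) (pi : X -> A -> R) : Prop :=
  forall x, beta0 <= pi x (astar x).

End Defs.

(* Main.v *)
Require Import Defs.
From HB Require Import structures.
From mathcomp Require Import all_boot all_order all_algebra.
From mathcomp Require Import all_classical all_reals all_analysis.
From mathcomp Require Import measurable_realfun.
From mathcomp Require Import ring lra.
Import Order.TTheory GRing.Theory Num.Theory.
Local Open Scope classical_set_scope.
Local Open Scope ring_scope.

Section R.
Variable R : realType.

Lemma powRE (a x : R) : 0 < a -> a `^ x = expR (x * ln a).
Proof. by move=> a0; rewrite /powR gt_eqF. Qed.

Lemma real_opt (nu M c D : R) : 0 < nu -> 0 < M -> 0 < c -> 0 < D ->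
  exists u, 0 < u /\ (c * u) `^ nu + D / (M * u) =
   ((((nu + 1) `^ ((nu + 1) / nu) * c) / (nu * M)) `^ (nu / (nu + 1)))
       * D `^ (nu / (nu + 1)).
Proof.
move=> n0 M0 c0 D0.
have [a ->] : exists a, c = expR a by exists (ln c); rewrite lnK.
have [b ->] : exists b, M = expR b by exists (ln M); rewrite lnK.
have [dl ->] : exists a, D = expR a by exists (ln D); rewrite lnK.
have en : nu = expR (ln nu) by rewrite lnK.
have ek : nu + 1 = expR (ln (nu + 1)) by rewrite lnK // posrE; lra.
set n := ln nu in en; set k := ln (nu + 1) in ek.
pose l := (dl - n - b - nu * a) / (nu + 1).
exists (expR l); split; first exact: expR_gt0.
have nu1 : nu + 1 != 0 by rewrite gt_eqF //; lra.
have nu0 : nu != 0 by rewrite gt_eqF.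
rewrite -expRD powRE ?expR_gt0 // (@expRK R).
rewrite -expRD -expRN -expRD.
rewrite {1}ek (@powRE (expR k) _ (expR_gt0 k)) expRK.
rewrite [X in X * expR b]en.
rewrite -[expR n * expR b]expRD -expRN -!expRD.
rewrite powRE ?expR_gt0 // expRK.
rewrite powRE ?expR_gt0 // expRK -expRD.
have -> : dl - (b + l) = nu * (a + l) + n.
  by rewrite /l; field.
have -> : nu / (nu + 1) * ((nu + 1) / nu * k + a - (n + b)) + nu / (nu + 1) * dl
   = nu * (a + l) + k.
  by rewrite /l; field; apply/andP; split.
rewrite !expRD -en -ek; ring.
Qed.

Lemma real_final_i (V D nu M c b0 : R) : 0 < nu -> 0 < M -> 0 < c -> 0 < b0 ->
  0 <= D ->
  (forall u, 0 < u -> V <= b0^-1 * ((c * u) `^ nu + D / (M * u))) ->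
  V <= ((((nu + 1) `^ ((nu + 1) / nu) * c) / (nu * M)) `^ (nu / (nu + 1))) / b0
       * D `^ (nu / (nu + 1)).
Proof.
move=> n0 M0 c0 b00 D0 H.
have nu1 : 0 < nu + 1 by lra.
move: D0; rewrite le_eqVlt => /orP[/eqP D0|Dp]; last first.
  have [u [u0 E]] := @real_opt nu M c D n0 M0 c0 Dp.
  have h := H u u0; apply: (le_trans h); rewrite E le_eqVlt; apply/orP; left.
  apply/eqP; rewrite mulrC -!mulrA; congr (_ * _); rewrite mulrC //.
subst D; rewrite powR0 ?mulr0; last by rewrite gt_eqF // divr_gt0.
apply/ler_addgt0Pr => e e0; rewrite add0r.
pose u := (b0 * e) `^ (nu^-1) / c.
have u0 : 0 < u by rewrite divr_gt0 // powR_gt0 // mulr_gt0.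
apply: (le_trans (H u u0)).
rewrite /u [c * _]mulrC divfK ?gt_eqF // -powRrM mulVf ?gt_eqF // powRr1; last first.
  by rewrite ltW // mulr_gt0.
by rewrite mul0r addr0 mulrA mulVf ?gt_eqF // mul1r lexx.
Qed.
End R.

Section Main.
Context {d : measure_display} {X : measurableType d} {R : realType} {A : finType}.
Variables (P : probability X R) (mu : X -> A -> R) (astar : X -> A) (M c beta0 : R).
Variable pi : X -> A -> R.
Hypothesis hopt : forall x a, mu x (astar x) <= mu x a.
Hypothesis M0 : 0 < M.
Hypothesis b0 : 0 < beta0.
Hypothesis hpol : is_policy pi.
Hypothesis hov : overlap astar beta0 pi.

Lemma big_only (F : A -> R) b : (forall a, a != b -> F a = 0) ->
  \sum_(a : A) F a = F b.
Proof. by move=> h; rewrite (bigD1 b) //= big1 ?addr0 // => a /h. Qed.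

Lemma pi_ge0 x a : 0 <= pi x a.
Proof. by case: hpol => h _; exact: h. Qed.

Lemma pi_sum x : \sum_(a : A) pi x a = 1.
Proof. by case: hpol => _ [h _]; exact: h. Qed.

Lemma pi_le1 x a : pi x a <= 1.
Proof.
rewrite -(pi_sum x) (bigD1 a) //= lerDl; apply: sumr_ge0 => i _; exact: pi_ge0.
Qed.

Lemma p_gt0 x : 0 < pi x (astar x).
Proof. exact: lt_le_trans b0 (hov x). Qed.

Lemma pistar_a x : pistar astar x (astar x) = 1 :> R.
Proof. by rewrite /pistar eqxx. Qed.

Lemma pistar_na x a : a != astar x -> pistar astar x a = 0 :> R.
Proof. by rewrite /pistar => /negbTE ->. Qed.

Lemma E1_eq x : \sum_(a : A) pi x a * (pistar astar x a / pi x a) = 1.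
Proof.
rewrite (@big_only _ (astar x)); last by move=> a /pistar_na ->; rewrite mul0r mulr0.
by rewrite pistar_a mul1r divff // gt_eqF // p_gt0.
Qed.

Lemma E2_eq x : \sum_(a : A) pi x a * (pistar astar x a / pi x a) ^+ 2
  = (\sum_(a : A) pistar astar x a * pi x a)^-1.
Proof.
rewrite (@big_only _ (astar x)); last by move=> a /pistar_na ->; rewrite mul0r expr0n mulr0.
rewrite (@big_only (fun a => _ * _) (astar x)); last by move=> a /pistar_na ->; rewrite mul0r.
by rewrite pistar_a !mul1r expr2 mulrA divff ?mul1r // ?gt_eqF // ?p_gt0.
Qed.

Lemma r2_eq x : \sum_(a : A) pistar astar x a * mu x a = mu x (astar x).
Proof.
rewrite (@big_only _ (astar x)); last by move=> a /pistar_na ->; rewrite mul0r.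
by rewrite pistar_a mul1r.
Qed.

Definition S (u : R) := [set x | exists2 a, a != astar x & mu x a - mu x (astar x) <= M * u].

Lemma key x u : 0 < u ->
  (\sum_(a : A) pistar astar x a * pi x a)^-1 <=
  1 + beta0^-1 * (\1_(S u) x + (\sum_(a : A) pi x a * mu x a - \sum_(a : A) pistar astar x a * mu x a) / (M * u)).
Proof.
move=> u0.
rewrite (@big_only (fun a => _ * _) (astar x)); last by move=> a /pistar_na ->; rewrite mul0r.
rewrite r2_eq pistar_a mul1r.
set b := astar x; set p := pi x b.
have p0 : 0 < p := p_gt0 x.
have Mu : 0 < M * u by rewrite mulr_gt0.
have h1p : 1 - p = \sum_(a | a != b) pi x a.
  by rewrite -(pi_sum x) (bigD1 b) //= addrC addrK.
have hr : \sum_(a : A) pi x a * mu x a - mu x b = \sum_(a | a != b) pi x a * (mu x a - mu x b).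
  rewrite -[X in _ - X]mul1r -(pi_sum x) mulr_suml -sumrB (bigD1 b) //=.
  by rewrite subrr add0r; apply: eq_bigr => a _; rewrite mulrBr.
have hr0 : 0 <= \sum_(a : A) pi x a * mu x a - mu x b.
  by rewrite hr; apply: sumr_ge0 => a _; rewrite mulr_ge0 ?pi_ge0 // subr_ge0 hopt.
have step1 : p^-1 <= 1 + beta0^-1 * (1 - p).
  rewrite -lerBlDl.
  have -> : p^-1 - 1 = (1 - p) * p^-1 by field; rewrite gt_eqF.
  rewrite mulrC ler_wpM2r ?subr_ge0 ?pi_le1 //.
  by rewrite lef_pV2 ?posrE // hov.
apply: (le_trans step1); rewrite lerD2l; apply: ler_wpM2l; first by rewrite invr_ge0 ltW.
rewrite /indic; have [_|xS] := boolP (x \in S u) => /=.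
  rewrite -[1 - p]addr0; apply: lerD; last by rewrite divr_ge0 // ltW.
  by rewrite lerBlDr lerDl ltW.
rewrite add0r h1p hr mulr_suml; apply: ler_sum => a ab.
rewrite -mulrA ler_peMr ?pi_ge0 // ler_pdivlMr // mul1r.
rewrite leNgt; apply/negP => H; move/negP: xS; apply; rewrite inE; exists a => //; exact: ltW.
Qed.


Hypothesis hint : forall a, P.-integrable setT (fun x => (mu x a)%:E).
Hypothesis hast : forall a, measurable [set x | astar x = a].

Lemma S_eq u : S u = [set x | (Delta_min mu astar x <= (M * u)%:E)%E].
Proof.
apply/seteqP; split => x /=.
  by case=> a ab h; rewrite /Delta_min; apply: (Order.TotalTheory.bigmin_inf a _ _ _ ab); rewrite lee_fin.
move=> /bigmin_leP [|[a ab h]]; first by rewrite leNgt ltey.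
by exists a => //; rewrite -lee_fin.
Qed.

Lemma mmu a : measurable_fun setT (fun x => mu x a).
Proof. by apply/measurable_realfun.measurable_EFinP; exact: (measurable_int _ (hint a)). Qed.

Lemma mle (f : X -> R) t : measurable_fun setT f -> measurable [set x | f x <= t].
Proof.
move=> mf; have := mf measurableT [set` `]-oo, t]] (measurable_itv _).
rewrite setTI; congr measurable; apply/seteqP; split => x /=; rewrite in_itv /=; by [].
Qed.

Lemma S_meas u : measurable (S u).
Proof.
have -> : S u = \bigcup_(b in [set: A]) ([set x | astar x = b] `&`
   \bigcup_(a in [set a | a != b]) [set x | mu x a - mu x b <= M * u]).
  apply/seteqP; split => x /=.
    by case=> a ab h; exists (astar x) => //; split => //; exists a.
  by case=> b _ [<- [a /= ab h]]; exists a.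
apply: fin_bigcup_measurable; first exact: finite_finset.
move=> b _; apply: measurableI; first exact: hast.
apply: fin_bigcup_measurable; first exact: finite_finset.
move=> a _; apply: mle; apply: measurable_funB; exact: mmu.
Qed.


Notation RI f := (P.-integrable setT (EFin \o f)).

Lemma RI_D (f g : X -> R) : RI f -> RI g -> RI (fun x => f x + g x).
Proof.
move=> hf hg; apply: (eq_integrable measurableT ((EFin \o f) \+ (EFin \o g))).
  by move=> x _ /=; rewrite EFinD.
exact: integrableD.
Qed.

Lemma RI_Z (k : R) (f : X -> R) : RI f -> RI (fun x => k * f x).
Proof.
move=> hf; apply: (eq_integrable measurableT (fun x => (k%:E * (EFin \o f) x)%E)).
  by move=> x _ /=; rewrite EFinM.
exact: integrableZl.
Qed.

Lemma RI_B (f g : X -> R) : RI f -> RI g -> RI (fun x => f x - g x).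
Proof.
move=> hf hg; apply: RI_D => //.
apply: (eq_integrable measurableT (fun x => ((-1)%:E * (EFin \o g) x)%E)).
  by move=> x _ /=; rewrite mulN1e.
exact: integrableZl.
Qed.

Lemma RI_cst (k : R) : RI (fun _ => k).
Proof. exact: finite_measure_integrable_cst. Qed.

Lemma RI_sum (F : A -> X -> R) : (forall a, RI (F a)) -> RI (fun x => \sum_(a : A) F a x).
Proof.
move=> hF; apply: (eq_integrable measurableT (fun x => \sum_(a <- enum A | true) (EFin \o F a) x)).
  by move=> x _ /=; rewrite sumEFin big_enum.
exact: integrable_sum.
Qed.

Lemma RI_ind u : RI (\1_(S u) : X -> R).
Proof. exact: (integrable_indic P (S_meas u)). Qed.

Lemma mpi a : measurable_fun setT (fun x => pi x a).
Proof. by case: hpol => _ [_ h]; exact: h. Qed.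

Lemma pistar_indic a : (fun x => pistar astar x a : R) = (\1_[set x | astar x = a] : X -> R).
Proof.
apply/funext => x; rewrite /pistar /indic.
case: (boolP (x \in _)) => [/set_mem /= ->|/negP h]; first by rewrite eqxx.
case: eqP => // e; exfalso; apply: h; apply/mem_set => /=; by rewrite e.
Qed.

Lemma mpistar a : measurable_fun setT (fun x => pistar astar x a : R).
Proof. rewrite pistar_indic; exact: measurable_indic. Qed.

Lemma RI_pimu a : RI (fun x => pi x a * mu x a).
Proof.
apply: (le_integrable measurableT _ _ (hint a)).
  apply/measurable_EFinP; apply: measurable_funM; [exact: mpi|exact: mmu].
move=> x _ /=; rewrite lee_fin normrM ler_piMl // ger0_norm ?pi_ge0 ?pi_le1 //.
Qed.

Lemma RI_pistarmu a : RI (fun x => pistar astar x a * mu x a).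
Proof.
apply: (le_integrable measurableT _ _ (hint a)).
  apply/measurable_EFinP; apply: measurable_funM; [exact: mpistar|exact: mmu].
move=> x _ /=; rewrite lee_fin normrM ler_piMl // /pistar; case: ifP => _;
  by rewrite ?normr1 ?normr0.
Qed.

Lemma mp : measurable_fun setT (fun x => \sum_(a : A) pistar astar x a * pi x a).
Proof.
apply: measurable_sum => a; apply: measurable_funM; [exact: mpistar|exact: mpi].
Qed.

Lemma p_eq x : \sum_(a : A) pistar astar x a * pi x a = pi x (astar x).
Proof.
rewrite (@big_only (fun a => _ * _) (astar x)); last by move=> a /pistar_na ->; rewrite mul0r.
by rewrite pistar_a mul1r.
Qed.

Lemma mE2 : measurable_fun setT (fun x => (\sum_(a : A) pistar astar x a * pi x a)^-1).
Proof.
have h1 : measurable (`]0, +oo[%classic : set R) by exact: measurable_itv.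
have h2 : measurable_fun (`]0, +oo[%classic : set R) (GRing.inv : R -> R).
  apply: open_continuous_measurable_fun; first exact: interval_open.
  move=> y; rewrite inE /= in_itv /= andbT => y0.
  by apply: inv_continuous; rewrite gt_eqF.
have h3 : (fun x => \sum_(a : A) pistar astar x a * pi x a) @` setT `<=` (`]0, +oo[%classic : set R).
  by move=> _ [x _ <-]; rewrite /= p_eq in_itv /= andbT p_gt0.
exact: (measurable_comp h1 h3 h2 mp).
Qed.

Lemma RI_E2 : RI (fun x => (\sum_(a : A) pistar astar x a * pi x a)^-1).
Proof.
apply: (le_integrable measurableT _ _ (RI_cst beta0^-1)).
  by apply/measurable_EFinP; exact: mE2.
move=> x _ /=; have := p_gt0 x; rewrite lee_fin p_eq => p0.
rewrite !ger0_norm ?invr_ge0 ?(ltW p0) ?(ltW b0) //.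
by rewrite lef_pV2 ?posrE // hov.
Qed.


Lemma Rint1 : Rintegral P setT (fun _ => 1 : R) = 1.
Proof. by rewrite Rintegral_cst // mul1r; exact: (congr1 fine (probability_setT P)). Qed.

Lemma Rint_ind u : Rintegral P setT (\1_(S u) : X -> R) = fine (P (S u)).
Proof. rewrite /Rintegral integral_indic //; last exact: S_meas. by have h := setIT (S u); rewrite h. Qed.

Lemma core u : 0 < u ->
  Varjoint P pi (fun x a => pistar astar x a / pi x a) <=
  beta0^-1 * (fine (P (S u)) + (Rstar P mu pi - Rstar P mu (pistar astar)) / (M * u)).
Proof.
move=> u0.
rewrite /Varjoint /Ejoint /Rstar /Ejoint.
have -> : Rintegral P setT (fun x => \sum_(a : A) pi x a * (pistar astar x a / pi x a)) = 1.
  by rewrite -Rint1; apply: eq_Rintegral => x _; rewrite E1_eq.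
have -> : Rintegral P setT (fun x => \sum_(a : A) pi x a * (pistar astar x a / pi x a) ^+ 2)
  = Rintegral P setT (fun x => (\sum_(a : A) pistar astar x a * pi x a)^-1).
  by apply: eq_Rintegral => x _; rewrite E2_eq.
set r1 := fun x => \sum_(a : A) pi x a * mu x a.
set r2 := fun x => \sum_(a : A) pistar astar x a * mu x a.
have I1 : RI r1 by apply: RI_sum => a; exact: RI_pimu.
have I2 : RI r2 by apply: RI_sum => a; exact: RI_pistarmu.
have I12 : RI (fun x => r1 x - r2 x) by exact: RI_B.
have I3 : RI (fun x => (r1 x - r2 x) / (M * u)).
  by apply: (eq_integrable measurableT (EFin \o (fun x => (M * u)^-1 * (r1 x - r2 x)))) => [x _ /=|];
    [rewrite mulrC | exact: RI_Z].
have I4 : RI (fun x => \1_(S u) x + (r1 x - r2 x) / (M * u)) by apply: RI_D => //; exact: RI_ind.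
have I5 : RI (fun x => beta0^-1 * (\1_(S u) x + (r1 x - r2 x) / (M * u))) by exact: RI_Z.
have := @le_Rintegral _ _ _ P setT _ _ measurableT RI_E2 (@RI_D _ _ (RI_cst 1) I5)
   (fun x _ => @key x u u0).
rewrite RintegralD //; last exact: RI_cst.
rewrite Rint1 RintegralZl // RintegralD //; last exact: RI_ind.
rewrite Rint_ind RintegralZr // RintegralB //.
move=> H; rewrite expr1n lerBlDl; exact: H.
Qed.


Lemma D_ge0 : 0 <= Rstar P mu pi - Rstar P mu (pistar astar).
Proof.
rewrite subr_ge0 /Rstar /Ejoint.
apply: (le_Rintegral measurableT); [apply: RI_sum => a; exact: RI_pistarmu|
  apply: RI_sum => a; exact: RI_pimu|].
move=> x _; rewrite r2_eq -[X in X <= _]mul1r -(pi_sum x) mulr_suml.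
by apply: ler_sum => a _; apply: ler_wpM2l; [exact: pi_ge0|exact: hopt].
Qed.

End Main.

Theorem mainTheorem6 (d : measure_display) (X : measurableType d) (R : realType)
  (A : finType) (P : probability X R) (mu : X -> A -> R) (astar : X -> A)
  (M c beta0 : R) :
  (forall a, P.-integrable setT (fun x => (mu x a)%:E)) ->
  (forall a, measurable [set x | astar x = a]) ->
  (forall x a, mu x (astar x) <= mu x a) ->
  0 < M -> 0 < c -> 0 < beta0 ->
  (* (i) nu in (0, oo) *)
  (forall nu : R, 0 < nu -> margin_fin P mu astar nu M c ->
     forall pi : X -> A -> R, is_policy pi -> overlap astar beta0 pi ->
     Varjoint P pi (fun x a => pistar astar x a / pi x a) <=
       ((((nu + 1) `^ ((nu + 1) / nu) * c) / (nu * M)) `^ (nu / (nu + 1))) / beta0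
       * (Rstar P mu pi - Rstar P mu (pistar astar)) `^ (nu / (nu + 1)))
  /\
  (* (ii) nu = oo *)
  (forall u0 : R, margin_inf P mu astar M u0 ->
     forall pi : X -> A -> R, is_policy pi -> overlap astar beta0 pi ->
     Varjoint P pi (fun x a => pistar astar x a / pi x a) <=
       (beta0 * M * u0)^-1 * (Rstar P mu pi - Rstar P mu (pistar astar))).
Proof.
move=> hint hast hopt M0 c0 b0; split.
- move=> nu nu0 marg pi hpol hov.
  apply: (@real_final_i R _ _ nu M c beta0) => //.
    by apply: D_ge0.
  move=> u u0.
  apply: (le_trans (core P mu astar M beta0 pi hopt M0 b0 hpol hov hint hast u u0)).
  apply: ler_wpM2l; first by rewrite invr_ge0 ltW.
  rewrite lerD2r.
  have h := marg u (ltW u0); rewrite -S_eq in h.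
  have hf : P (S mu astar M u) \is a fin_num.
    by rewrite ge0_fin_numE ?measure_ge0 // (le_lt_trans h) ?ltry.
  by rewrite -lee_fin fineK.
- move=> u0 [u0p marg0] pi hpol hov.
  apply: (le_trans (core P mu astar M beta0 pi hopt M0 b0 hpol hov hint hast u0 u0p)).
  rewrite S_eq marg0 /= add0r le_eqVlt; apply/orP; left; apply/eqP.
  by field; rewrite !gt_eqF.
Qed.
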